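(* Let $\mu_1,\dots,\mu_n\in\mathrm{Prob}([-R,R])$ and $h\in C_\mathbb{R}([-R,R]^n)$. Let $\Xi(N)=(\xi_1(N),\dots,\xi_n(N))$ and $\Xi'(N)=(\xi_1'(N),\dots,\xi_n'(N))$ be two approximating sequences for $(\mu_1,\dots,\mu_n)$. Then $$\limsup_{N\to\infty}\frac1N\log\Biggl[\frac{1}{(N!)^n}\sum_{\sigma_1,\dots,\sigma_n\in S_N}\exp\bigl(N\kappa_N(h(\sigma_1(\xi_1(N)),\dots,\sigma_n(\xi_n(N))))\bigr)\Biggr]$$ is equal to the same expression with $\xi_i(N)$ replaced by $\xi_i'(N)$ for all $i$. That is, the mutual pressure $P_\mathrm{sym}(h:\mu_1,\dots,\mu_n)$ does not depend on the choice of the approximating sequence.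
   Context: Fix $R>0$ and $n\in\mathbb{N}$. $\mathrm{Prob}([-R,R]^n)$ denotes the set of Borel probability measures on $[-R,R]^n$, and $C_\mathbb{R}([-R,R]^n)$ the real Banach space of real continuous functions on $[-R,R]^n$ with the sup-norm $\|f\|=\max|f|$. For $\mathbf{x}=(x_1,\dots,x_N)\in\mathbb{R}^N$ let $\kappa_N(\mathbf{x})=\frac1N\sum_{j=1}^Nx_j$; powers $\mathbf{x}^k$ and products of vectors are taken coordinatewise. Let $[-R,R]_\le^N=\{(x_1,\dots,x_N)\in[-R,R]^N:x_1\le\dots\le x_N\}$. The symmetric group $S_N$ acts on $\mathbb{R}^N$ by $\sigma(\mathbf{x})=(x_{\sigma^{-1}(1)},\dots,x_{\sigma^{-1}(N)})$. An approximating sequence for $(\mu_1,\dots,\mu_n)$, $\mu_i\in\mathrm{Prob}([-R,R])$, is a sequence $\Xi(N)=(\xi_1(N),\dots,\xi_n(N))$, $N\in\mathbb{N}$, with $\xi_i(N)\in[-R,R]_\le^N$ and $\kappa_N(\xi_i(N)^k)\to\int x^k\,d\mu_i(x)$ as $N\to\infty$ for all $k\in\mathbb{N}$ and $1\le i\le n$. For $h\in C_\mathbb{R}([-R,R]^n)$ and $\mathbf{x}_i=(x_{i1},\dots,x_{iN})\in[-R,R]^N$, $1\le i\le n$, set $\kappa_N(h(\mathbf{x}_1,\dots,\mathbf{x}_n))=\frac1N\sum_{j=1}^Nh(x_{1j},\dots,x_{nj})$. The mutual pressure $P_\mathrm{sym}(h:\mu_1,\dots,\mu_n)$ is defined as the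 displayed $\limsup$ computed with an approximating sequence. *)

(* Defs.v *)
From Stdlib Require Import Reals.
From mathcomp Require Import all_boot perm.
Set Implicit Arguments.
Unset Strict Implicit.
Unset Printing Implicit Defensive.

Local Open Scope R_scope.

Definition Rsum (T : finType) (F : T -> R) : R := \big[Rplus/0]_(t : T) F t.

Definition in_int (Rb x : R) : Prop := - Rb <= x <= Rb.

Definition cont_int (Rb : R) (f : R -> R) : Prop :=
  forall x, in_int Rb x -> forall eps, 0 < eps -> exists d, 0 < d /\
    forall y, in_int Rb y -> Rabs (x - y) < d -> Rabs (f x - f y) < eps.

Definition cont_cube (n : nat) (Rb : R) (h : ('I_n -> R) -> R) : Prop :=
  forall x, (forall i, in_int Rb (x i)) -> forall eps, 0 < eps -> exists d, 0 < d /\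
    forall y, (forall i, in_int Rb (y i)) ->
      (forall i, Rabs (x i - y i) < d) -> Rabs (h x - h y) < eps.

(* A Borel probability measure on [-Rb,Rb], represented (Riesz) by its
   integration functional f |-> \int f dmu on C_R([-Rb,Rb]): linear, positive,
   normalized, depending only on the values on [-Rb,Rb]. *)
Record ProbInt (Rb : R) := {
  integ : (R -> R) -> R;
  integ_local : forall f g, (forall x, in_int Rb x -> f x = g x) -> integ f = integ g;
  integ_add : forall f g, cont_int Rb f -> cont_int Rb g ->
    integ (fun x => f x + g x) = integ f + integ g;
  integ_scal : forall a f, cont_int Rb f -> integ (fun x => a * f x) = a * integ f;
  integ_pos : forall f, cont_int Rb f -> (forall x, in_int Rb x -> 0 <= f x) ->
    0 <= integ f;
  integ_one : integ (fun _ => 1) = 1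
}.

Definition kappa (N : nat) (x : 'I_N -> R) : R := / INR N * Rsum x.

Definition in_sorted_cube (Rb : R) (N : nat) (x : 'I_N -> R) : Prop :=
  (forall j, in_int Rb (x j)) /\ (forall j j' : 'I_N, (j <= j')%N -> x j <= x j').

Definition approximating (n : nat) (Rb : R) (mu : 'I_n -> ProbInt Rb)
    (Xi : 'I_n -> forall N : nat, 'I_N -> R) : Prop :=
  (forall i N, in_sorted_cube Rb (Xi i N)) /\
  (forall i (k : nat),
     Un_cv (fun N => kappa (fun j => (Xi i N j) ^ k)) (integ (mu i) (fun x => x ^ k))).

Definition perm_act (N : nat) (s : {perm 'I_N}) (x : 'I_N -> R) : 'I_N -> R :=
  fun j => x ((s^-1)%g j).

Definition kappa_h (n N : nat) (h : ('I_n -> R) -> R) (x : 'I_n -> 'I_N -> R) : R :=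
  kappa (fun j => h (fun i => x i j)).

Definition pressure_term (n : nat) (h : ('I_n -> R) -> R)
    (Xi : 'I_n -> forall N : nat, 'I_N -> R) (N : nat) : R :=
  / INR N * ln (/ (INR (N`!)) ^ n *
    Rsum (fun s : {ffun 'I_n -> {perm 'I_N}} =>
      exp (INR N * kappa_h h (fun i => perm_act (s i) (Xi i N))))).

Definition is_limsup (u : nat -> R) (l : R) : Prop :=
  forall eps, 0 < eps ->
    (exists M, forall N, (M <= N)%nat -> u N < l + eps) /\
    (forall M, exists N, (M <= N)%nat /\ l - eps < u N).

(* Main.v *)
Require Import Defs.
From Stdlib Require Import Reals Lra Lia Classical ClassicalEpsilon.
From HB Require Import structures.
From mathcomp Require Import all_boot perm.
Require Import Defs.
Set Implicit Arguments.
Unset Strict Implicit.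
Unset Printing Implicit Defensive.
Local Open Scope R_scope.

Lemma Rplus_assoc' : associative Rplus.
Proof. move=> a b c; ring. Qed.
HB.instance Definition _ := Monoid.isComLaw.Build R 0 Rplus Rplus_assoc' Rplus_comm Rplus_0_l.

Lemma bigR_scal (I : Type) (r : seq I) (P : pred I) (F : I -> R) c :
  c * \big[Rplus/0]_(i <- r | P i) F i = \big[Rplus/0]_(i <- r | P i) (c * F i).
Proof.
elim: r => [|a r IH]; first by rewrite !big_nil; ring.
rewrite !big_cons; case: (P a); rewrite -IH //; ring.
Qed.

Lemma bigR_le (I : Type) (r : seq I) (P : pred I) (F G : I -> R) :
  (forall i, P i -> F i <= G i) ->
  \big[Rplus/0]_(i <- r | P i) F i <= \big[Rplus/0]_(i <- r | P i) G i.
Proof.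
move=> H; apply: (big_ind2 (fun a b => a <= b)) => //; [lra| move=> *; lra].
Qed.

Lemma bigR_ge0 (I : Type) (r : seq I) (P : pred I) (F : I -> R) :
  (forall i, P i -> 0 <= F i) -> 0 <= \big[Rplus/0]_(i <- r | P i) F i.
Proof.
move=> H; apply: (big_ind (fun a => 0 <= a)) => //; [lra| move=> *; lra].
Qed.

Lemma bigR_abs (I : Type) (r : seq I) (P : pred I) (F : I -> R) :
  Rabs (\big[Rplus/0]_(i <- r | P i) F i) <= \big[Rplus/0]_(i <- r | P i) Rabs (F i).
Proof.
apply: (big_ind2 (fun a b => Rabs a <= b)).
- rewrite Rabs_R0; lra.
- move=> a b c d H1 H2. apply: Rle_trans (Rabs_triang _ _) _; lra.
- move=> *; lra.
Qed.

Lemma bigR_const_ord N c : \big[Rplus/0]_(k < N) c = INR N * c.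
Proof.
rewrite big_const_ord; elim: N => [|N IH] /=; first by ring.
rewrite IH; change (c + INR N * c = INR (S N) * c); rewrite S_INR; ring.
Qed.

Lemma bigR_cv (I : Type) (r : seq I) (u : I -> nat -> R) (l : I -> R) :
  (forall i, Un_cv (u i) (l i)) ->
  Un_cv (fun N => \big[Rplus/0]_(i <- r) u i N) (\big[Rplus/0]_(i <- r) l i).
Proof.
move=> H; elim: r => [|a r IH].
- rewrite big_nil. move=> e he; exists 0%nat => N _. rewrite big_nil /Rdist Rminus_0_r Rabs_R0; lra.
- rewrite big_cons. have := CV_plus _ _ _ _ (H a) IH.
  move=> Hc e he; case: (Hc e he) => N0 HN; exists N0 => N hN. rewrite big_cons; exact: HN.
Qed.

Lemma Rsum_pos (T : finType) (F : T -> R) (t0 : T) :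
  (forall t, 0 < F t) -> 0 < Rsum F.
Proof.
move=> H; rewrite /Rsum (bigD1 t0) //=.
have := @bigR_ge0 _ (index_enum T) (fun j => j != t0) F (fun i _ => Rlt_le _ _ (H i)).
have := H t0; lra.
Qed.

Definition peval (l : seq (R * nat)) (x : R) : R :=
  \big[Rplus/0]_(p <- l) (p.1 * x ^ p.2).

Definition IsPoly (f : R -> R) := exists l, forall x, f x = peval l x.

Lemma poly_ext f g : (forall x, f x = g x) -> IsPoly f -> IsPoly g.
Proof. move=> H [l Hl]; exists l => x; rewrite -H; exact: Hl. Qed.

Lemma poly_const c : IsPoly (fun _ => c).
Proof. exists [:: (c, 0%N)] => x; rewrite /peval big_cons big_nil /=; ring. Qed.

Lemma poly_id : IsPoly (fun x => x).
Proof. exists [:: (1, 1%N)] => x; rewrite /peval big_cons big_nil /=; ring. Qed.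

Lemma poly_add f g : IsPoly f -> IsPoly g -> IsPoly (fun x => f x + g x).
Proof.
move=> [l1 H1] [l2 H2]; exists (l1 ++ l2) => x; rewrite H1 H2 /peval big_cat //.
Qed.

Lemma poly_mul f g : IsPoly f -> IsPoly g -> IsPoly (fun x => f x * g x).
Proof.
move=> [l1 H1] [l2 H2].
exists [seq (p.1 * q.1, (p.2 + q.2)%N) | p <- l1, q <- l2] => x.
rewrite H1 H2 /peval big_allpairs_dep.
rewrite Rmult_comm bigR_scal; apply: eq_bigr => p _.
rewrite Rmult_comm bigR_scal; apply: eq_bigr => q _ /=.
rewrite pow_add; ring.
Qed.

Lemma poly_scal c f : IsPoly f -> IsPoly (fun x => c * f x).
Proof. move=> H; apply: (poly_mul (poly_const c) H). Qed.

Lemma poly_pow f k : IsPoly f -> IsPoly (fun x => f x ^ k).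
Proof.
move=> H; elim: k => [|k IH] /=; first exact: poly_const.
exact: poly_mul.
Qed.

Lemma kappa_peval N (X : 'I_N -> R) l :
  kappa (fun k => peval l (X k)) = \big[Rplus/0]_(p <- l) (p.1 * kappa (fun k => X k ^ p.2)).
Proof.
rewrite /kappa /Rsum /peval exchange_big bigR_scal; apply: eq_bigr => p _.
rewrite bigR_scal bigR_scal bigR_scal; apply: eq_bigr => k _; ring.
Qed.

Lemma nat_between z : 0 <= z -> exists K : nat, z <= INR K <= z + 1.
Proof.
move=> hz; case: (INR_unbounded z) => n Hn.
elim: n Hn => [|n IH] Hn.
- simpl in Hn; lra.
- case: (Rlt_le_dec z (INR n)) => H; first exact: IH.
  exists (S n); rewrite S_INR; rewrite S_INR in Hn; lra.
Qed.

Lemma bern (u : R) (K : nat) : 0 <= u <= 1 -> 1 - INR K * u <= (1 - u) ^ K.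
Proof.
move=> hu; elim: K => [|K IH]; first by simpl; lra.
rewrite S_INR /=.
have h1 : (1 - u) * (1 - INR K * u) <= (1 - u) * (1 - u) ^ K.
  apply: Rmult_le_compat_l; lra.
have h2 : 0 <= INR K * u * u by apply: Rmult_le_pos; [apply: Rmult_le_pos; [apply: pos_INR|lra]|lra].
nra.
Qed.

Lemma pow_exp_bound (u : R) (K : nat) : 0 <= u <= 1 -> (1 - u) ^ K <= exp (- (INR K * u)).
Proof.
move=> hu; elim: K => [|K IH].
  simpl; replace (-(0*u)) with 0 by ring; rewrite exp_0; lra.
rewrite S_INR /=.
replace (- ((INR K + 1) * u)) with ((- u) + - (INR K * u)) by ring.
rewrite exp_plus; apply: Rmult_le_compat.
- lra.
- apply: pow_le; lra.
- have := exp_ineq1_le (- u); lra.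
- exact: IH.
Qed.

Lemma step_core (a b eta : R) : 0 <= a -> a < b -> b <= 1 -> 0 < eta ->
  exists m K : nat,
    (forall s, 0 <= s -> s <= a -> 1 - eta <= (1 - s ^ m) ^ K) /\
    (forall s, b <= s -> s <= 1 -> (1 - s ^ m) ^ K <= eta).
Proof.
move=> ha hab hb he.
have hb0 : 0 < b by lra.
set r := a / b.
have hr0 : 0 <= r by apply: Rmult_le_pos; [lra| apply: Rlt_le; apply: Rinv_0_lt_compat; lra].
have hr1 : r < 1.
  rewrite /r; apply (Rmult_lt_reg_r b); first lra.
  rewrite /Rdiv Rmult_assoc Rinv_l; lra.
set y := eta / (/ eta + 1).
have hy : 0 < y.
  rewrite /y; apply: Rdiv_lt_0_compat => //; have := Rinv_0_lt_compat _ he; lra.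
case: (pow_lt_1_zero r ltac:(rewrite Rabs_right; lra) y hy) => m Hm.
have hrm := Hm m (Nat.le_refl m).
rewrite Rabs_right in hrm; last by apply: Rle_ge; apply: pow_le.
have hbm : 0 < b ^ m by apply: pow_lt.
have hbm1 : b ^ m <= 1 by rewrite -(pow1 m); apply: pow_incr; lra.
set z := / (eta * b ^ m).
have hz : 0 < z by apply: Rinv_0_lt_compat; apply: Rmult_lt_0_compat.
case: (nat_between (Rlt_le _ _ hz)) => K [hK1 hK2].
have hKb : INR K * b ^ m >= / eta.
  have : z * b ^ m = / eta by rewrite /z Rinv_mult Rmult_assoc Rinv_l; lra.
  move=> e; apply: Rle_ge; rewrite -e; apply: Rmult_le_compat_r; lra.
have ham : a ^ m = r ^ m * b ^ m.
  rewrite -Rpow_mult_distr /r; f_equal; field; lra.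
have hyr : r ^ m * (/ eta + 1) < eta.
  have : y * (/ eta + 1) = eta.
    have := Rinv_0_lt_compat _ he => hie.
    rewrite /y; field; lra.
  move=> e.
  have : r ^ m * (/ eta + 1) < y * (/ eta + 1).
    apply: Rmult_lt_compat_r; last exact: hrm.
    have := Rinv_0_lt_compat _ he; lra.
  lra.
exists m, K; split.
- move=> s hs0 hsa.
  have hsm : s ^ m <= a ^ m by apply: pow_incr; lra.
  have ham1 : a ^ m <= 1 by rewrite -(pow1 m); apply: pow_incr; lra.
  have hs1 : s ^ m <= 1 by lra.
  have hs0' : 0 <= s ^ m by apply: pow_le.
  have := bern K (conj hs0' hs1).
  have hKa : INR K * a ^ m <= eta.
    rewrite ham.
    have e1 : INR K * (r ^ m * b ^ m) = r ^ m * (INR K * b ^ m) by ring.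
    rewrite e1.
    have : INR K * b ^ m <= / eta + b ^ m.
      have : z * b ^ m = / eta by rewrite /z Rinv_mult Rmult_assoc Rinv_l; lra.
      move=> e; rewrite -e.
      have := Rmult_le_compat_r (b ^ m) _ _ (Rlt_le _ _ hbm) hK2; lra.
    move=> h; have hrm0 : 0 <= r ^ m by apply: pow_le.
    have := Rmult_le_compat_l _ _ _ hrm0 h. nra.
  have : INR K * s ^ m <= INR K * a ^ m by apply: Rmult_le_compat_l; [apply: pos_INR|].
  lra.
- move=> s hbs hs1.
  have hsm : b ^ m <= s ^ m by apply: pow_incr; lra.
  have hs1' : s ^ m <= 1 by rewrite -(pow1 m); apply: pow_incr; lra.
  apply: Rle_trans (pow_exp_bound K (conj (Rlt_le _ _ (Rlt_le_trans _ _ _ hbm hsm)) hs1')) _.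
  have hK0 : 0 <= INR K := pos_INR K.
  have h3 : INR K * b ^ m <= INR K * s ^ m by apply: Rmult_le_compat_l.
  have h4 := exp_ineq1_le (INR K * s ^ m).
  have h5 : exp (INR K * s ^ m) >= / eta by lra.
  have hE : exp (- (INR K * s ^ m)) = / exp (INR K * s ^ m) by rewrite exp_Ropp.
  rewrite hE.
  have hep := exp_pos (INR K * s ^ m).
  rewrite -(Rinv_inv eta); apply: Rinv_le_contravar; [apply: Rinv_0_lt_compat|]; lra.
Qed.

Lemma pow01 (u : R) k : 0 <= u <= 1 -> 0 <= u ^ k <= 1.
Proof.
move=> hu; split; first by apply: pow_le; lra.
rewrite -(pow1 k); apply: pow_incr; lra.
Qed.

Lemma step_poly (Rb t g eta : R) : 0 < Rb -> 0 < g -> 0 < eta ->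
  exists p, IsPoly p /\ (forall x, in_int Rb x -> 0 <= p x <= 1) /\
    (forall x, in_int Rb x -> x <= t -> 1 - eta <= p x) /\
    (forall x, in_int Rb x -> t + g <= x -> p x <= eta).
Proof.
move=> hR hg he.
case: (Rlt_le_dec Rb (t + g)) => h1.
  exists (fun _ => 1); split; first exact: poly_const.
  split; first by move=> *; lra.
  split; first by move=> *; lra.
  move=> x [hx1 hx2] hx; lra.
case: (Rlt_le_dec t (- Rb)) => h2.
  exists (fun _ => 0); split; first exact: poly_const.
  split; first by move=> *; lra.
  split; last by move=> *; lra.
  move=> x [hx1 hx2] hx; lra.
set s := fun x => (x + Rb) / (2 * Rb).
have hs : forall x y, x <= y -> s x <= s y.
  move=> x y hxy; rewrite /s /Rdiv; apply: Rmult_le_compat_r; last lra.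
  apply: Rlt_le; apply: Rinv_0_lt_compat; lra.
have hs01 : forall x, in_int Rb x -> 0 <= s x <= 1.
  move=> x [hx1 hx2]; split.
  - rewrite /s /Rdiv; apply: Rmult_le_pos; [lra| apply: Rlt_le; apply: Rinv_0_lt_compat; lra].
  - rewrite /s; apply: (Rmult_le_reg_r (2 * Rb)); first lra.
    rewrite /Rdiv Rmult_assoc Rinv_l; lra.
have hab : s t < s (t + g).
  rewrite /s /Rdiv; apply: Rmult_lt_compat_r; [apply: Rinv_0_lt_compat|]; lra.
have ha0 : 0 <= s t.
  have ht : in_int Rb t by rewrite /in_int; lra.
  have := hs01 t ht; lra.
have hb1 : s (t + g) <= 1.
  have ht : in_int Rb (t + g) by rewrite /in_int; lra.
  have := hs01 _ ht; lra.
case: (step_core ha0 hab hb1 he) => m [K [Hc1 Hc2]].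
exists (fun x => (1 - s x ^ m) ^ K); split.
  apply: poly_pow; apply: (@poly_ext (fun x => 1 + (-1) * ((/ (2 * Rb)) * x + Rb / (2 * Rb)) ^ m)).
    move=> x; rewrite /s.
    have -> : (x + Rb) / (2 * Rb) = / (2 * Rb) * x + Rb / (2 * Rb) by field; lra.
    ring.
  apply: poly_add; first exact: poly_const.
  apply: poly_scal; apply: poly_pow; apply: poly_add; last exact: poly_const.
  apply: poly_scal; exact: poly_id.
split.
  move=> x hx; apply: pow01; have := pow01 m (hs01 x hx); lra.
split.
  move=> x hx hxt; apply: Hc1; [exact: (proj1 (hs01 x hx))| exact: hs].
move=> x hx hxt; apply: Hc2; [exact: hs| exact: (proj2 (hs01 x hx))].
Qed.

Lemma bigR_add (I : Type) (r : seq I) (F G : I -> R) :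
  \big[Rplus/0]_(i <- r) (F i + G i) = \big[Rplus/0]_(i <- r) F i + \big[Rplus/0]_(i <- r) G i.
Proof. elim: r => [|a r IH]; rewrite ?big_nil ?big_cons ?IH; ring. Qed.

Lemma bigR_sub (I : Type) (r : seq I) (F G : I -> R) :
  \big[Rplus/0]_(i <- r) (F i - G i) = \big[Rplus/0]_(i <- r) F i - \big[Rplus/0]_(i <- r) G i.
Proof. elim: r => [|a r IH]; rewrite ?big_nil ?big_cons ?IH; ring. Qed.

Definition sortedv N (x : 'I_N -> R) := forall j j' : 'I_N, (j <= j')%N -> x j <= x j'.

Definition indC N (x y : 'I_N -> R) (t g : R) (k : 'I_N) : R :=
  if Rle_dec (y k) t then (if Rle_dec (t + g) (x k) then 1 else 0) else 0.

Lemma indC_ge0 N (x y : 'I_N -> R) t g k : 0 <= indC x y t g k.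
Proof. rewrite /indC; case: Rle_dec => h1 /=; [case: Rle_dec => h2 /=|]; lra. Qed.

Lemma countC Rb N (x y : 'I_N -> R) t g eta (p : R -> R) :
  (forall k, in_int Rb (x k)) -> (forall k, in_int Rb (y k)) ->
  sortedv x -> sortedv y -> 0 <= eta ->
  (forall z, in_int Rb z -> 0 <= p z <= 1) ->
  (forall z, in_int Rb z -> z <= t -> 1 - eta <= p z) ->
  (forall z, in_int Rb z -> t + g <= z -> p z <= eta) ->
  \big[Rplus/0]_(k < N) indC x y t g k <=
    Rabs (\big[Rplus/0]_(k < N) p (y k) - \big[Rplus/0]_(k < N) p (x k)) + INR N * (2 * eta).
Proof.
move=> hx hy sx sy he hp01 hp1 hp2.
have hR0 : 0 <= Rabs (\big[Rplus/0]_(k < N) p (y k) - \big[Rplus/0]_(k < N) p (x k)) + INR N * (2 * eta).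
  have := Rabs_pos (\big[Rplus/0]_(k < N) p (y k) - \big[Rplus/0]_(k < N) p (x k)).
  have := pos_INR N; nra.
case: (classic (exists k0, y k0 <= t /\ t + g <= x k0)) => [[k0 [hk1 hk2]]|hno].
- apply: Rle_trans (_ : \big[Rplus/0]_(k < N) (p (y k) - p (x k) + 2 * eta) <= _).
    apply: bigR_le => k _; rewrite /indC.
    have hpy := hp01 _ (hy k); have hpx := hp01 _ (hx k).
    case: Rle_dec => h1 /=; [case: Rle_dec => h2 /=|].
    + have := hp1 _ (hy k) h1; have := hp2 _ (hx k) h2; lra.
    + have := hp1 _ (hy k) h1; lra.
    + have : t + g <= x k.
        case: (leqP k0 k) => hk.
        * have := sx _ _ hk; lra.
        * have := sy _ _ (ltnW hk); lra.
      move=> h2; have := hp2 _ (hx k) h2; lra.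
  rewrite bigR_add bigR_sub bigR_const_ord.
  apply: Rplus_le_compat_r; exact: Rle_abs.
- rewrite big1; first lra.
  move=> k _; rewrite /indC; case: Rle_dec => h1 /= //; case: Rle_dec => h2 /= //.
  exfalso; apply: hno; exists k; tauto.
Qed.

Lemma grid Rb g L y : 0 < g -> - Rb <= y <= - Rb + INR L * g ->
  exists m, (m <= L)%N /\ - Rb + INR m * g - g <= y <= - Rb + INR m * g.
Proof.
move=> hg; elim: L => [|L IH] hy.
- exists 0%N; split => //; simpl in *; lra.
- case: (Rle_dec y (- Rb + INR L * g)) => h.
  + case: IH; first lra. move=> m [hm hm']; exists m; split => //; exact: leqW.
  + exists L.+1; split => //; rewrite S_INR in hy *; lra.
Qed.

Definition indBad N (x y : 'I_N -> R) (d : R) (k : 'I_N) : R :=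
  if Rle_dec d (Rabs (x k - y k)) then 1 else 0.

Lemma indBad_ge0 N (x y : 'I_N -> R) d k : 0 <= indBad x y d k.
Proof. rewrite /indBad; case: Rle_dec => h1 /=; lra. Qed.

Lemma bad_cover Rb N (x y : 'I_N -> R) g L k :
  0 < g -> 2 * Rb <= INR L * g -> in_int Rb (x k) -> in_int Rb (y k) ->
  indBad x y (2 * g) k <=
  \big[Rplus/0]_(m < L.+1) (indC x y (- Rb + INR m * g) g k + indC y x (- Rb + INR m * g) g k).
Proof.
move=> hg hL [hx1 hx2] [hy1 hy2]; rewrite /indBad; case: Rle_dec => hb /=; last first.
  apply: bigR_ge0 => m _; have := indC_ge0 x y (- Rb + INR m * g) g k;
  have := indC_ge0 y x (- Rb + INR m * g) g k; lra.
have hsum : forall (F : 'I_L.+1 -> R) (m : 'I_L.+1), (forall i, 0 <= F i) -> F m <= \big[Rplus/0]_(i < L.+1) F i.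
  move=> F m hF; rewrite (bigD1 m) //.
  rewrite -[X in X <= _]Rplus_0_r; apply: Rplus_le_compat_l.
  apply: bigR_ge0 => i _; exact: hF.
have hF : forall i : 'I_L.+1, 0 <= indC x y (- Rb + INR i * g) g k + indC y x (- Rb + INR i * g) g k.
  move=> i; have := indC_ge0 x y (- Rb + INR i * g) g k;
  have := indC_ge0 y x (- Rb + INR i * g) g k; lra.
case: (Rle_dec (y k + 2 * g) (x k)) => hc.
- case: (@grid Rb g L (y k) hg) => [|m [hm [hm1 hm2]]]; first lra.
  have hm' : (m < L.+1)%N by [].
  apply: (Rle_trans _ _ _ _ (hsum _ (Ordinal hm') hF)); simpl.
  have hC : indC x y (- Rb + INR m * g) g k = 1.
    rewrite /indC; case: Rle_dec => h1 /=; last lra.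
    case: Rle_dec => h2 /=; lra.
  rewrite hC; have := indC_ge0 y x (- Rb + INR m * g) g k; lra.
- have hc' : x k + 2 * g <= y k.
    move: hb; rewrite /Rabs; case: Rcase_abs => ?; lra.
  case: (@grid Rb g L (x k) hg) => [|m [hm [hm1 hm2]]]; first lra.
  have hm' : (m < L.+1)%N by [].
  apply: (Rle_trans _ _ _ _ (hsum _ (Ordinal hm') hF)); simpl.
  have hC : indC y x (- Rb + INR m * g) g k = 1.
    rewrite /indC; case: Rle_dec => h1 /=; last lra.
    case: Rle_dec => h2 /=; lra.
  rewrite hC; have := indC_ge0 x y (- Rb + INR m * g) g k; lra.
Qed.

Lemma term_le_sum (T : finType) (F : T -> R) (t : T) :
  (forall i, 0 <= F i) -> F t <= \big[Rplus/0]_(i : T) F i.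
Proof.
move=> hF; rewrite (bigD1 t) //.
rewrite -[X in X <= _]Rplus_0_r; apply: Rplus_le_compat_l.
apply: bigR_ge0 => i _; exact: hF.
Qed.

Lemma bad_count Rb N (x y : 'I_N -> R) g L eta (p : 'I_L.+1 -> R -> R) :
  0 < g -> 2 * Rb <= INR L * g -> 0 <= eta ->
  (forall k, in_int Rb (x k)) -> (forall k, in_int Rb (y k)) ->
  sortedv x -> sortedv y ->
  (forall (m : 'I_L.+1) z, in_int Rb z -> 0 <= p m z <= 1) ->
  (forall (m : 'I_L.+1) z, in_int Rb z -> z <= - Rb + INR m * g -> 1 - eta <= p m z) ->
  (forall (m : 'I_L.+1) z, in_int Rb z -> - Rb + INR m * g + g <= z -> p m z <= eta) ->
  \big[Rplus/0]_(k < N) indBad x y (2 * g) k <=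
  \big[Rplus/0]_(m < L.+1) (2 * Rabs (\big[Rplus/0]_(k < N) p m (x k) - \big[Rplus/0]_(k < N) p m (y k))
                            + INR N * (4 * eta)).
Proof.
move=> hg hL he hx hy sx sy hp01 hp1 hp2.
apply: Rle_trans (_ : \big[Rplus/0]_(k < N) \big[Rplus/0]_(m < L.+1)
   (indC x y (- Rb + INR m * g) g k + indC y x (- Rb + INR m * g) g k) <= _).
  apply: bigR_le => k _; exact: bad_cover.
rewrite exchange_big; apply: bigR_le => m _.
rewrite bigR_add.
have h1 := countC (hx) (hy) sx sy he (hp01 m) (hp1 m) (hp2 m).
have h2 := countC (hy) (hx) sy sx he (hp01 m) (hp1 m) (hp2 m).
apply: Rle_trans (Rplus_le_compat _ _ _ _ h1 h2) _.
rewrite [X in _ <= 2 * X + _]Rabs_minus_sym.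
set S1 := \big[Rplus/0]_(k < N) p m (x k); set S2 := \big[Rplus/0]_(k < N) p m (y k); rewrite (Rabs_minus_sym S1 S2); lra.
Qed.

Definition cubev n Rb (x : 'I_n -> R) := forall i, in_int Rb (x i).

Lemma cv_le_const (u : nat -> R) l M k : Un_cv u l -> (forall j, (k <= j)%coq_nat -> u j <= M) -> l <= M.
Proof.
move=> hu hM; case: (Rle_dec l M) => // hlt; exfalso.
case: (hu (l - M)) => [|N0 HN]; first lra.
have := HN (Nat.max N0 k) (Nat.le_max_l _ _).
have := hM (Nat.max N0 k) (Nat.le_max_r _ _).
rewrite /Rdist /Rabs; case: Rcase_abs => ? ? ?; lra.
Qed.

Section UC.
Variables (n : nat) (Rb : R) (h : ('I_n -> R) -> R) (eps : R).
Hypothesis hRb : 0 < Rb.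
Hypothesis hh : cont_cube Rb h.
Hypothesis heps : 0 < eps.

Definition wk (k : nat) : R := 2 * Rb * (/ 2) ^ k.

Lemma wk_pos k : 0 < wk k.
Proof. rewrite /wk; apply: Rmult_lt_0_compat; [lra| apply: pow_lt; lra]. Qed.

Lemma wkS k : wk k.+1 = wk k / 2.
Proof. rewrite /wk /=; field. Qed.

Definition Bad (c : 'I_n -> R) (k : nat) : Prop :=
  forall d, 0 < d -> exists a b : 'I_n -> R,
    (forall i, c i <= a i <= c i + wk k) /\ cubev Rb a /\ cubev Rb b /\
    (forall i, Rabs (a i - b i) < d) /\ eps <= Rabs (h a - h b).

Definition goodc (c c' : 'I_n -> R) k := forall i, c i <= c' i /\ c' i + wk k.+1 <= c i + wk k.

Lemma split_bad c k : Bad c k -> exists c', goodc c c' k /\ Bad c' k.+1.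
Proof.
move=> hB; apply: NNPP => hno.
pose cf (f : {ffun 'I_n -> bool}) := fun i => c i + (if f i then wk k.+1 else 0).
have hgood : forall f, goodc c (cf f) k.
  move=> f i; rewrite /cf wkS; have := wk_pos k; case: (f i); lra.
have hnb : forall f, exists d, 0 < d /\ ~ (exists a b : 'I_n -> R,
    (forall i, cf f i <= a i <= cf f i + wk k.+1) /\ cubev Rb a /\ cubev Rb b /\
    (forall i, Rabs (a i - b i) < d) /\ eps <= Rabs (h a - h b)).
  move=> f; apply: NNPP => H; apply: hno; exists (cf f); split; first exact: hgood.
  move=> d hd; apply: NNPP => H2; apply: H; exists d; split => //.
pose D f := proj1_sig (constructive_indefinite_description _ (hnb f)).
have hD : forall f, 0 < D f /\ _ := fun f => proj2_sig (constructive_indefinite_description _ (hnb f)).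
pose S := \big[Rplus/0]_(f : {ffun 'I_n -> bool}) / D f.
have hS : forall f, / D f <= S.
  move=> f; rewrite /S; apply: (@term_le_sum _ (fun f => / D f) f) => g.
  apply: Rlt_le; apply: Rinv_0_lt_compat; exact: (proj1 (hD g)).
have hSpos : 0 < S.
  apply: Rlt_le_trans (hS [ffun=> true]); apply: Rinv_0_lt_compat; exact: (proj1 (hD _)).
case: (hB (/ S)) => [|a [b [ha [hca [hcb [hab hhab]]]]]]; first exact: Rinv_0_lt_compat.
pose f := [ffun i => if Rlt_dec (c i + wk k.+1) (a i) then true else false].
apply: (proj2 (hD f)); exists a, b; split; last split => //; last split => //; last split => //.
- move=> i; rewrite /cf /f ffunE; have := ha i; rewrite wkS.
  case: Rlt_dec => hl /= ; rewrite ?wkS; lra.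
- move=> i; apply: Rlt_le_trans (hab i) _.
  have hf := hS f; have hDf := proj1 (hD f).
  rewrite -[X in _ <= X](Rinv_inv (D f)); apply: Rinv_le_contravar => //; exact: Rinv_0_lt_compat.
Qed.


Lemma next_ex c k : exists c', Bad c k -> goodc c c' k /\ Bad c' k.+1.
Proof.
case: (classic (Bad c k)) => H; last by exists c.
case: (split_bad H) => c' hc; exists c' => _; exact: hc.
Qed.

Definition nextc c k := proj1_sig (constructive_indefinite_description _ (next_ex c k)).

Fixpoint Cs (k : nat) : 'I_n -> R :=
  match k with 0 => fun _ => - Rb | S k => nextc (Cs k) k end.

Hypothesis B0 : Bad (fun _ => - Rb) 0.

Lemma Cs_prop k : Bad (Cs k) k /\ goodc (Cs k) (Cs k.+1) k.
Proof.
elim: k => [|k [IH1 IH2]].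
- have := proj2_sig (constructive_indefinite_description _ (next_ex (Cs 0) 0)) B0.
  move=> [h1 h2]; split => //.
- have hb : Bad (Cs k.+1) k.+1.
    have := proj2_sig (constructive_indefinite_description _ (next_ex (Cs k) k)) IH1.
    by move=> [].
  split => //.
  have := proj2_sig (constructive_indefinite_description _ (next_ex (Cs k.+1) k.+1)) hb.
  by move=> [].
Qed.

Lemma Cs_mono i k j : (k <= j)%coq_nat -> Cs k i <= Cs j i /\ Cs j i + wk j <= Cs k i + wk k.
Proof.
elim: j => [|j IH] hkj.
- have -> : k = 0%nat by lia. lra.
- case: (Nat.eq_dec k j.+1) => e; first by subst; lra.
  have [h1 h2] := IH ltac:(lia).
  have [h3 h4] := proj2 (Cs_prop j) i. lra.
Qed.

Lemma Cs_bound i k : - Rb <= Cs k i /\ Cs k i + wk k <= Rb.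
Proof.
have [h1 h2] := Cs_mono i (Nat.le_0_l k).
have : wk 0 = 2 * Rb by rewrite /wk /=; ring.
simpl in h1, h2; lra.
Qed.

Lemma UC_false : False.
Proof.
have grow : forall i, Un_growing (fun j => Cs j i).
  move=> i j; exact: (proj1 (Cs_mono i (Nat.le_succ_diag_r j))).
have ub : forall i, has_ub (fun j => Cs j i).
  move=> i; exists Rb => y [j ->]; have := Cs_bound i j; have := wk_pos j; lra.
pose x i := proj1_sig (growing_cv _ (grow i) (ub i)).
have hx : forall i, Un_cv (fun j => Cs j i) (x i) := fun i => proj2_sig (growing_cv _ (grow i) (ub i)).
have hxk : forall i k, Cs k i <= x i <= Cs k i + wk k.
  move=> i k; split; first exact: (growing_ineq _ _ (grow i) (hx i) k).
  apply: (cv_le_const (hx i) (k := k)) => j hj.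
  have := Cs_mono i hj; have := wk_pos j; lra.
have hxc : cubev Rb x.
  move=> i; have := hxk i 0%nat; have : wk 0 = 2 * Rb by rewrite /wk /=; ring.
  simpl; rewrite /in_int; lra.
have heps2 : 0 < eps / 2 by lra.
case: (@hh x hxc (eps / 2) heps2) => d0 [hd0 Hd0].
case: (pow_lt_1_zero (/ 2) ltac:(rewrite Rabs_right; lra) (d0 / (4 * Rb))) => [|k Hk].
  apply: Rdiv_lt_0_compat; lra.
have hwk : wk k < d0 / 2.
  have := Hk k (Nat.le_refl k); rewrite Rabs_right; last by apply: Rle_ge; apply: pow_le; lra.
  rewrite /wk => hk'.
  have : 2 * Rb * (/ 2) ^ k < 2 * Rb * (d0 / (4 * Rb)) by apply: Rmult_lt_compat_l; lra.
  have : 2 * Rb * (d0 / (4 * Rb)) = d0 / 2 by field; lra.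
  lra.
case: (proj1 (Cs_prop k) (d0 / 2)) => [|a [b [ha [hca [hcb [hab hhab]]]]]]; first lra.
have h1 := Hd0 a hca.
have h2 := Hd0 b hcb.
have hxa : forall i, Rabs (x i - a i) < d0 / 2.
  move=> i; have := hxk i k; have := ha i; rewrite /Rabs; case: Rcase_abs => ?; lra.
have hxb : forall i, Rabs (x i - b i) < d0.
  move=> i; have := hxa i; have := hab i.
  have := Rabs_triang (x i - a i) (a i - b i).
  have -> : x i - a i + (a i - b i) = x i - b i by ring.
  lra.
have hd2 : d0 / 2 < d0 by lra.
have := h1 (fun i => Rlt_trans _ _ _ (hxa i) hd2); have := h2 hxb.
have := Rabs_triang (h x - h a) (h b - h x).
have -> : h x - h a + (h b - h x) = - (h a - h b) by ring.
rewrite Rabs_Ropp (Rabs_minus_sym (h b)). lra.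
Qed.

End UC.

Lemma unif_cont n Rb (h : ('I_n -> R) -> R) : 0 < Rb -> cont_cube Rb h ->
  forall eps, 0 < eps -> exists d, 0 < d /\ forall a b, cubev Rb a -> cubev Rb b ->
    (forall i, Rabs (a i - b i) < d) -> Rabs (h a - h b) < eps.
Proof.
move=> hR hh eps he; apply: NNPP => H.
apply: (@UC_false n Rb h eps hR hh he).
move=> d hd; apply: NNPP => H2; apply: H; exists d; split => // a b ha hb hab.
apply: NNPP => H3; apply: H2; exists a, b; split; last by split => //; split => //; split => //; lra.
move=> i; have := ha i; rewrite /wk /in_int /=; lra.
Qed.

Lemma in_int_abs Rb v : in_int Rb v <-> Rabs v <= Rb.
Proof.
rewrite /in_int /Rabs; case: Rcase_abs => ?; split; move=> H; try lra; split; lra.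
Qed.

Lemma h_bounded n Rb (h : ('I_n -> R) -> R) : 0 < Rb -> cont_cube Rb h ->
  exists M, 0 <= M /\ forall a, cubev Rb a -> Rabs (h a) <= M.
Proof.
move=> hR hh.
case: (unif_cont hR hh Rlt_0_1) => d [hd Hd].
case: (INR_unbounded (Rb / d)) => L0 HL0.
set L := S L0.
have hL : Rb / d < INR L by rewrite /L S_INR; lra.
have hLpos : 0 < INR L by rewrite /L S_INR; have := pos_INR L0; lra.
set z : 'I_n -> R := fun _ => 0.
have hz : cubev Rb z by move=> i; rewrite /z /in_int; lra.
exists (Rabs (h z) + INR L + 2); split.
  have := Rabs_pos (h z); lra.
move=> a ha.
pose aj (j : nat) : 'I_n -> R := fun i => INR j / INR L * a i.
have haj : forall j, (j <= L)%coq_nat -> cubev Rb (aj j).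
  move=> j hj i; apply/in_int_abs; rewrite /aj Rabs_mult.
  have h1 : Rabs (INR j / INR L) <= 1.
    rewrite Rabs_right; last by apply: Rle_ge; apply: Rmult_le_pos; [apply: pos_INR| apply: Rlt_le; apply: Rinv_0_lt_compat; lra].
    apply: (Rmult_le_reg_r (INR L)) => //; rewrite /Rdiv Rmult_assoc Rinv_l; last lra.
    rewrite Rmult_1_r Rmult_1_l; apply: le_INR; lia.
  have h2 := (proj1 (in_int_abs Rb (a i)) (ha i)).
  have h3 := Rabs_pos (a i); have h4 := Rabs_pos (INR j / INR L). nra.
have step : forall j, (j < L)%coq_nat -> Rabs (h (aj j.+1) - h (aj j)) < 1.
  move=> j hj; apply: Hd; try apply: haj; try lia.
  move=> i; rewrite /aj S_INR.
  have -> : (INR j + 1) / INR L * a i - INR j / INR L * a i = a i / INR L by field; lra.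
  rewrite /Rdiv Rabs_mult Rabs_inv (Rabs_right (INR L)); last lra.
  apply: (Rmult_lt_reg_r (INR L)) => //; rewrite /Rdiv Rmult_assoc Rinv_l; last lra.
  have := proj1 (in_int_abs Rb (a i)) (ha i).
  have : Rb < d * INR L.
    have := Rmult_lt_compat_r d _ _ hd hL. rewrite /Rdiv Rmult_assoc Rinv_l; lra.
  lra.
have chain : forall j, (j <= L)%coq_nat -> Rabs (h (aj j) - h z) <= INR j + 1.
  elim => [|j IH] hj.
  - have -> : INR 0 + 1 = 1 by simpl; ring.
    apply: Rlt_le; apply: Hd; [exact: haj| exact: hz|].
    move=> i; rewrite /aj /z /= /Rdiv Rmult_0_l Rmult_0_l Rminus_0_r Rabs_R0; lra.
  - have := IH ltac:(lia); have := step j ltac:(lia).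
    have := Rabs_triang (h (aj j.+1) - h (aj j)) (h (aj j) - h z).
    have -> : h (aj j.+1) - h (aj j) + (h (aj j) - h z) = h (aj j.+1) - h z by ring.
    rewrite S_INR; lra.
have hlast : Rabs (h a - h (aj L)) < 1.
  apply: Hd => //; first exact: haj.
  move=> i; rewrite /aj /Rdiv Rinv_r; last lra.
  rewrite Rmult_1_l Rminus_diag Rabs_R0; lra.
have := chain L (Nat.le_refl L).
have := Rabs_triang (h a - h (aj L)) (h (aj L) - h z).
have -> : h a - h (aj L) + (h (aj L) - h z) = h a - h z by ring.
have := Rabs_triang (h a - h z) (h z).
have -> : h a - h z + h z = h a by ring.
lra.
Qed.

Lemma Un_cv_ext (u v : nat -> R) l : (forall N, u N = v N) -> Un_cv u l -> Un_cv v l.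
Proof. move=> e hu eps he; case: (hu eps he) => N0 H; exists N0 => N hN; rewrite -e; exact: H. Qed.

Lemma Un_cv_abs0 (u : nat -> R) : Un_cv u 0 -> Un_cv (fun N => Rabs (u N)) 0.
Proof.
move=> hu eps he; case: (hu eps he) => N0 H; exists N0 => N hN.
have := H N hN; rewrite /Rdist !Rminus_0_r Rabs_Rabsolu //.
Qed.

Lemma poly_good n Rb (mu : 'I_n -> ProbInt Rb) Xi Xi' p :
  approximating mu Xi -> approximating mu Xi' -> IsPoly p -> forall i,
  Un_cv (fun N => kappa (fun k => p (Xi i N k)) - kappa (fun k => p (Xi' i N k))) 0.
Proof.
move=> [_ hX] [_ hX'] [l hl] i.
apply: (@Un_cv_ext (fun N => \big[Rplus/0]_(q <- l) (q.1 * (kappa (fun k => Xi i N k ^ q.2) - kappa (fun k => Xi' i N k ^ q.2))))).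
  move=> N.
  have -> : (fun k => p (Xi i N k)) = (fun k => peval l (Xi i N k)).
    by apply: FunctionalExtensionality.functional_extensionality => k; rewrite hl.
  have -> : (fun k => p (Xi' i N k)) = (fun k => peval l (Xi' i N k)).
    by apply: FunctionalExtensionality.functional_extensionality => k; rewrite hl.
  rewrite !kappa_peval -bigR_sub; apply: eq_bigr => q _; ring.
have H0 : \big[Rplus/0]_(q <- l) (q.1 * 0) = 0.
  elim: l {hl} => [|a r IH]; rewrite ?big_nil ?big_cons ?IH //; ring.
suff Hc : Un_cv (fun N => \big[Rplus/0]_(q <- l) (q.1 * (kappa (fun k => Xi i N k ^ q.2) - kappa (fun k => Xi' i N k ^ q.2)))) (\big[Rplus/0]_(q <- l) (q.1 * 0)).
  by rewrite H0 in Hc.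
apply: bigR_cv => q.
apply: (CV_mult (fun _ => q.1)).
  move=> e he; exists 0%nat => N _; rewrite /Rdist Rminus_diag Rabs_R0; lra.
have := CV_minus _ _ _ _ (hX i q.2) (hX' i q.2); rewrite Rminus_diag //.
Qed.

Lemma lnsum_le (T : finType) (t0 : T) (F G : T -> R) c :
  (forall t, F t <= G t + c) ->
  ln (Rsum (fun t => exp (F t))) <= ln (Rsum (fun t => exp (G t))) + c.
Proof.
move=> H.
have hS : 0 < Rsum (fun t => exp (G t)) by apply: (Rsum_pos t0) => t; exact: exp_pos.
have hS' : 0 < Rsum (fun t => exp (F t)) by apply: (Rsum_pos t0) => t; exact: exp_pos.
have hle : Rsum (fun t => exp (F t)) <= exp c * Rsum (fun t => exp (G t)).
  rewrite /Rsum bigR_scal; apply: bigR_le => t _.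
  rewrite -exp_plus; have [h1|h1] : F t < c + G t \/ F t = c + G t by have := H t; lra.
  - by apply: Rlt_le; apply: exp_increasing.
  - by rewrite h1; lra.
have hle' : ln (Rsum (fun t => exp (F t))) <= ln (exp c * Rsum (fun t => exp (G t))).
  case: (Rle_lt_or_eq_dec _ _ hle) => hl; last by rewrite hl; lra.
  by apply: Rlt_le; apply: ln_increasing.
move: hle'; rewrite ln_mult ?ln_exp //; [lra| exact: exp_pos].
Qed.

Lemma lnsum_abs (T : finType) (t0 : T) (F G : T -> R) c :
  (forall t, Rabs (F t - G t) <= c) ->
  Rabs (ln (Rsum (fun t => exp (F t))) - ln (Rsum (fun t => exp (G t)))) <= c.
Proof.
move=> H.
have h1 := @lnsum_le T t0 F G c (fun t => ltac:(have := H t; rewrite /Rabs; case: Rcase_abs => ?; lra)).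
have h2 := @lnsum_le T t0 G F c (fun t => ltac:(have := H t; rewrite /Rabs; case: Rcase_abs => ?; lra)).
rewrite /Rabs; case: Rcase_abs => ?; lra.
Qed.

Lemma press_close n (h : ('I_n -> R) -> R) (Xi Xi' : 'I_n -> forall N : nat, 'I_N -> R) N c :
  (1 <= N)%N -> 0 <= c ->
  (forall s : {ffun 'I_n -> {perm 'I_N}},
     Rabs (kappa_h h (fun i => perm_act (s i) (Xi i N)) - kappa_h h (fun i => perm_act (s i) (Xi' i N))) <= c) ->
  Rabs (pressure_term h Xi N - pressure_term h Xi' N) <= c.
Proof.
move=> hN hc H.
have hNp : 0 < INR N by apply: lt_0_INR; apply/ltP.
have hF : 0 < INR N`! by apply: lt_0_INR; apply/ltP; exact: fact_gt0.
have hA : 0 < / (INR N`! ^ n) by apply: Rinv_0_lt_compat; apply: pow_lt.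
set t0 : {ffun 'I_n -> {perm 'I_N}} := [ffun=> 1%g].
have hS : forall X : 'I_n -> forall N : nat, 'I_N -> R,
    0 < Rsum (fun s : {ffun 'I_n -> {perm 'I_N}} => exp (INR N * kappa_h h (fun i => perm_act (s i) (X i N)))).
  move=> X; apply: (Rsum_pos t0) => t; exact: exp_pos.
rewrite /pressure_term ln_mult // ln_mult //.
have := @lnsum_abs _ t0 (fun s => INR N * kappa_h h (fun i => perm_act (s i) (Xi i N)))
   (fun s => INR N * kappa_h h (fun i => perm_act (s i) (Xi' i N))) (INR N * c).
move=> Hl.
have Hl' := Hl (fun s => ltac:(rewrite -Rmult_minus_distr_l Rabs_mult Rabs_right; [apply: Rmult_le_compat_l; [lra| exact: H]| lra])).
set S1 := ln (Rsum _) in Hl' *.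
set S2 := ln (Rsum _) in Hl' *.
have -> : / INR N * (ln (/ (INR N`! ^ n)) + S1) - / INR N * (ln (/ (INR N`! ^ n)) + S2) = / INR N * (S1 - S2) by ring.
rewrite Rabs_mult Rabs_right; last by apply: Rle_ge; apply: Rlt_le; apply: Rinv_0_lt_compat.
apply: (Rmult_le_reg_l (INR N)) => //.
rewrite -Rmult_assoc Rinv_r; lra.
Qed.

Lemma limsup_transfer (u v : nat -> R) l :
  (forall c, 0 < c -> exists N0, forall N, (N0 <= N)%N -> Rabs (u N - v N) <= c) ->
  is_limsup u l -> is_limsup v l.
Proof.
move=> Hc Hu eps he.
case: (Hc (eps / 2)) => [|N0 HN0]; first lra.
case: (Hu (eps / 2)) => [|H1 H2]; first lra.
split.
- case: H1 => M HM; exists (maxn M N0) => N hN.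
  have := HM N (leq_trans (leq_maxl _ _) hN).
  have := HN0 N (leq_trans (leq_maxr _ _) hN).
  rewrite /Rabs; case: Rcase_abs => ?; lra.
- move=> M; case: (H2 (maxn M N0)) => N [hN hN'].
  exists N; split; first exact: (leq_trans (leq_maxl _ _) hN).
  have := HN0 N (leq_trans (leq_maxr _ _) hN).
  rewrite /Rabs; case: Rcase_abs => ?; lra.
Qed.

Lemma key n Rb (mu : 'I_n -> ProbInt Rb) (h : ('I_n -> R) -> R) (Xi Xi' : 'I_n -> forall N : nat, 'I_N -> R) :
  0 < Rb -> cont_cube Rb h -> approximating mu Xi -> approximating mu Xi' ->
  forall c, 0 < c -> exists N0, forall N, (N0 <= N)%N -> forall s : {ffun 'I_n -> {perm 'I_N}},
    Rabs (kappa_h h (fun i => perm_act (s i) (Xi i N)) - kappa_h h (fun i => perm_act (s i) (Xi' i N))) <= c.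
Proof.
move=> hR hh hX hX' c hc.
case: (h_bounded hR hh) => M [hM HM].
have heps : 0 < c / 3 by lra.
case: (unif_cont hR hh heps) => d [hd Hd].
set g := d / 2.
have hg : 0 < g by rewrite /g; lra.
case: (INR_unbounded (2 * Rb / g)) => L HL.
have hL : 2 * Rb <= INR L * g.
  have : 2 * Rb / g * g = 2 * Rb by field; lra.
  have := Rmult_lt_compat_r g _ _ hg HL; lra.
have hn0 := pos_INR n; have hL0 := pos_INR L.
set eta := c / (24 * (M + 1) * (INR n + 1) * (INR L + 1)).
have heta : 0 < eta.
  rewrite /eta; apply: Rdiv_lt_0_compat => //.
  repeat apply: Rmult_lt_0_compat; lra.
have Hp : forall m : 'I_L.+1, exists p, IsPoly p /\ (forall x, in_int Rb x -> 0 <= p x <= 1) /\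
    (forall x, in_int Rb x -> x <= - Rb + INR m * g -> 1 - eta <= p x) /\
    (forall x, in_int Rb x -> - Rb + INR m * g + g <= x -> p x <= eta).
  move=> m; exact: step_poly.
pose pm m := proj1_sig (constructive_indefinite_description _ (Hp m)).
have hpm : forall m, _ := fun m => proj2_sig (constructive_indefinite_description _ (Hp m)).
pose D i m N := kappa (fun k => pm m (Xi i N k)) - kappa (fun k => pm m (Xi' i N k)).
pose E N := \big[Rplus/0]_(i < n) \big[Rplus/0]_(m < L.+1) Rabs (D i m N).
have hE : Un_cv E 0.
  have H0 : \big[Rplus/0]_(i < n) \big[Rplus/0]_(m < L.+1) (0 : R) = 0.
    by rewrite big1 // => i _; rewrite big1.
  suff Hc : Un_cv E (\big[Rplus/0]_(i < n) \big[Rplus/0]_(m < L.+1) (0 : R)) by rewrite H0 in Hc.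
  apply: bigR_cv => i; apply: bigR_cv => m; apply: Un_cv_abs0.
  exact: (poly_good hX hX' (proj1 (hpm m))).
case: (hE (c / (12 * (M + 1)))) => [|N0 HN0].
  apply: Rdiv_lt_0_compat => //; lra.
exists (maxn N0 1) => N hN s.
have hN1 : (1 <= N)%N := leq_trans (leq_maxr _ _) hN.
have hEN : E N < c / (12 * (M + 1)).
  have := HN0 N (leP (leq_trans (leq_maxl _ _) hN)).
  rewrite /Rdist Rminus_0_r => H; apply: Rle_lt_trans H; exact: Rle_abs.
have hNp : 0 < INR N by apply: lt_0_INR; apply/ltP.
pose ind i k := indBad (Xi i N) (Xi' i N) (2 * g) k.
have ind0 : forall i k, 0 <= ind i k by move=> i k; exact: indBad_ge0.
have hcub : forall (X : 'I_n -> forall N : nat, 'I_N -> R), approximating mu X ->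
    forall j, cubev Rb (fun i => X i N (((s i)^-1)%g j)).
  move=> X [hX1 _] j i; exact: (proj1 (hX1 i N)).
have stepA : Rabs (kappa_h h (fun i => perm_act (s i) (Xi i N)) - kappa_h h (fun i => perm_act (s i) (Xi' i N)))
   <= / INR N * \big[Rplus/0]_(j < N) (c / 3 + 2 * M * \big[Rplus/0]_(i < n) ind i (((s i)^-1)%g j)).
  rewrite /kappa_h /kappa /perm_act /Rsum -Rmult_minus_distr_l -bigR_sub Rabs_mult.
  rewrite Rabs_right; last by apply: Rle_ge; apply: Rlt_le; apply: Rinv_0_lt_compat.
  apply: Rmult_le_compat_l; first by apply: Rlt_le; apply: Rinv_0_lt_compat.
  apply: Rle_trans (bigR_abs _ _ _) _; apply: bigR_le => j _.
  have hsum0 : 0 <= \big[Rplus/0]_(i < n) ind i (((s i)^-1)%g j) by apply: bigR_ge0 => i _.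
  case: (classic (forall i, Rabs (Xi i N (((s i)^-1)%g j) - Xi' i N (((s i)^-1)%g j)) < d)) => H.
  - have := Hd _ _ (hcub _ hX j) (hcub _ hX' j) H.
    have := Rmult_le_pos _ _ (Rmult_le_pos _ _ (Rlt_le _ _ Rlt_0_2) hM) hsum0. lra.
  - case: (not_all_ex_not _ _ H) => i Hi.
    have h1 : ind i (((s i)^-1)%g j) = 1.
      rewrite /ind /indBad; case: Rle_dec => /= hh1 //; exfalso; apply: Hi.
      rewrite /g in hh1; lra.
    have h2 := @term_le_sum _ (fun i => ind i (((s i)^-1)%g j)) i (fun i => ind0 _ _).
    simpl in h2; rewrite h1 in h2.
    have h3 := HM _ (hcub _ hX j); have h4 := HM _ (hcub _ hX' j).
    have h5 := Rabs_triang (h (fun i => Xi i N (((s i)^-1)%g j))) (- h (fun i => Xi' i N (((s i)^-1)%g j))).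
    rewrite Rabs_Ropp in h5.
    have h6 : 2 * M <= 2 * M * \big[Rplus/0]_(i < n) ind i (((s i)^-1)%g j).
      rewrite -[X in X <= _]Rmult_1_r; apply: Rmult_le_compat_l; [lra| exact: h2].
    rewrite /Rminus; lra.
have stepB : \big[Rplus/0]_(j < N) (c / 3 + 2 * M * \big[Rplus/0]_(i < n) ind i (((s i)^-1)%g j))
   = INR N * (c / 3) + 2 * M * \big[Rplus/0]_(i < n) \big[Rplus/0]_(k < N) ind i k.
  rewrite bigR_add bigR_const_ord -bigR_scal exchange_big; congr (_ + 2 * M * _).
  apply: eq_bigr => i _.
  by rewrite [RHS](reindex_inj (@perm_inj _ ((s i)^-1)%g)).
have stepC : forall i, \big[Rplus/0]_(k < N) ind i k <=
    INR N * (2 * \big[Rplus/0]_(m < L.+1) Rabs (D i m N) + INR L.+1 * (4 * eta)).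
  move=> i.
  have [hc1 hs1] := proj1 hX i N; have [hc2 hs2] := proj1 hX' i N.
  apply: Rle_trans (bad_count (p := pm) hg hL (Rlt_le _ _ heta) hc1 hc2 hs1 hs2
     (fun m => proj1 (proj2 (hpm m))) (fun m => proj1 (proj2 (proj2 (hpm m))))
     (fun m => proj2 (proj2 (proj2 (hpm m))))) _.
  apply: Req_le.
  have e : forall m : 'I_L.+1, \big[Rplus/0]_(k < N) pm m (Xi i N k) - \big[Rplus/0]_(k < N) pm m (Xi' i N k)
     = INR N * D i m N.
    move=> m; rewrite /D /kappa /Rsum -Rmult_minus_distr_l -Rmult_assoc Rinv_r; last lra.
    by rewrite Rmult_1_l.
  rewrite bigR_add bigR_const_ord.
  have e2 : \big[Rplus/0]_(m < L.+1) (2 * Rabs (\big[Rplus/0]_(k < N) pm m (Xi i N k) - \big[Rplus/0]_(k < N) pm m (Xi' i N k)))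
     = INR N * 2 * \big[Rplus/0]_(m < L.+1) Rabs (D i m N).
    rewrite bigR_scal; apply: eq_bigr => m _; rewrite e Rabs_mult (Rabs_right (INR N)); [ring| lra].
  rewrite e2; ring.
have stepD : \big[Rplus/0]_(i < n) \big[Rplus/0]_(k < N) ind i k <=
    INR N * (2 * E N + INR n * (INR L.+1 * (4 * eta))).
  apply: (@Rle_trans _ (\big[Rplus/0]_(i < n) (INR N * (2 * \big[Rplus/0]_(m < L.+1) Rabs (D i m N) + INR L.+1 * (4 * eta))))).
    apply: bigR_le => i _; exact: stepC.
  apply: Req_le; rewrite -bigR_scal bigR_add bigR_const_ord -bigR_scal /E; reflexivity.
rewrite stepB in stepA.
move: stepA stepD hEN.
set SI := \big[Rplus/0]_(i < n) \big[Rplus/0]_(k < N) ind i k.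
set EE := E N.
set K := kappa_h h _ - kappa_h h _.
move=> stepA stepD hEN.
have hE0 : 0 <= EE by rewrite /EE /E; apply: bigR_ge0 => i _; apply: bigR_ge0 => m _; exact: Rabs_pos.
have fin1 : / INR N * (INR N * (c / 3) + 2 * M * SI) <= c / 3 + 2 * M * (2 * EE + INR n * (INR L.+1 * (4 * eta))).
  have h1 : 2 * M * SI <= 2 * M * (INR N * (2 * EE + INR n * (INR L.+1 * (4 * eta)))).
    apply: Rmult_le_compat_l; lra.
  have h2 : / INR N * (INR N * (c / 3) + 2 * M * (INR N * (2 * EE + INR n * (INR L.+1 * (4 * eta)))))
     = c / 3 + 2 * M * (2 * EE + INR n * (INR L.+1 * (4 * eta))) by field; lra.
  rewrite -h2; apply: Rmult_le_compat_l; first by apply: Rlt_le; apply: Rinv_0_lt_compat.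
  lra.
have fin2 : 4 * M * EE <= c / 3.
  have : EE * (12 * (M + 1)) < c.
    have := Rmult_lt_compat_r (12 * (M + 1)) _ _ ltac:(lra) hEN.
    have -> : c / (12 * (M + 1)) * (12 * (M + 1)) = c by field; lra.
    done.
  nra.
have fin3 : 8 * M * (INR n * (INR L.+1 * eta)) <= c / 3.
  have he : eta * (24 * (M + 1) * (INR n + 1) * (INR L + 1)) = c by rewrite /eta; field; repeat split; lra.
  rewrite S_INR.
  have h1 : M * (INR n * ((INR L + 1) * eta)) <= (M + 1) * ((INR n + 1) * ((INR L + 1) * eta)).
    apply: Rmult_le_compat; try lra.
    - apply: Rmult_le_pos; first lra. apply: Rmult_le_pos; lra.
    - apply: Rmult_le_compat; try lra.
      + apply: Rmult_le_pos; lra.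
  have : (M + 1) * ((INR n + 1) * ((INR L + 1) * eta)) = c / 24 by rewrite -he; field.
  lra.
have : K <= Rabs K by exact: Rle_abs.
lra.
Qed.


Theorem lemma1p2 (Rb : R) (n : nat) (hRb : 0 < Rb)
    (mu : 'I_n -> ProbInt Rb) (h : ('I_n -> R) -> R) (hh : cont_cube Rb h)
    (Xi Xi' : 'I_n -> forall N : nat, 'I_N -> R)
    (hXi : approximating mu Xi) (hXi' : approximating mu Xi') :
  forall l : R, is_limsup (pressure_term h Xi) l <-> is_limsup (pressure_term h Xi') l.
Proof.
have close : forall c, 0 < c -> exists N0, forall N, (N0 <= N)%N ->
    Rabs (pressure_term h Xi N - pressure_term h Xi' N) <= c.
  move=> c hc; case: (key hRb hh hXi hXi' hc) => N0 HN0; exists (maxn N0 1) => N hN.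
  apply: press_close; first exact: (leq_trans (leq_maxr _ _) hN); first lra.
  exact: HN0 (leq_trans (leq_maxl _ _) hN).
move=> l; split; apply: limsup_transfer => c hc; case: (close c hc) => N0 H; exists N0 => N hN.
- exact: H.
- rewrite Rabs_minus_sym; exact: H.
Qed.
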